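(* Under the standing assumptions in the context, let $\mathcal U$ be a sufficiently small neighborhood of $(0,\bar X)$ and let $\omega\subset\mathcal U\cap\{t>0\}$. Let $\phi>0$ be a bounded function on $\omega$ and suppose there is $C>0$ with \[ \phi^2 a\le C\Delta,\qquad \phi\,|\partial_t\Delta|\le C\Delta,\qquad \phi\,|\partial_t a|\le C a\qquad\text{on }\omega . \] Then there is $C'>0$ such that on $\omega$ \[ \phi^2\le C'\lambda_1,\qquad \phi\,|\partial_t\lambda_1|\le C'\lambda_1,\qquad \phi\,|\partial_t\lambda_2|\le C'\lambda_2 . \]
   Context: Let $W\subset\mathbb R^l$ be open, $\bar X\in W$, $c,T>0$, and let $a(t,X),b(t,X)$ be real-valued $C^\infty$ functions on $(-c,T)\times W$ with bounded derivatives of all orders. Assume $\Delta(t,X):=4a(t,X)^3-27b(t,X)^2\ge 0$ on $[0,T)\times W$, $a(0,\bar X)=0$, and $a(t,X)>0$ on $(0,T)\times W$. Let $S(t,X)=\begin{bmatrix}3&0&-a\\0&2a&3b\\-a&3b&a^2\end{bmatrix}$ and let $0\le\lambda_1\le\lambda_2\le\lambda_3$ be its eigenvalues (smooth on $\mathcal U\cap\{t>0\}$ for $\mathcal U$ a small neighborhood of $(0,\bar X)$). *)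

(* Defs.v *)
From HB Require Import structures.
From mathcomp Require Import all_boot all_order all_algebra.
From mathcomp Require Import all_classical all_reals all_analysis.
Set Implicit Arguments. Unset Strict Implicit. Unset Printing Implicit Defensive.
Import Order.TTheory GRing.Theory Num.Theory.
Import numFieldNormedType.Exports.
Local Open Scope classical_set_scope.
Local Open Scope ring_scope.

Section Defs.
Variables (R : realType) (l : nat).
Notation pt := (R * 'rV[R]_l)%type.

Definition shift (p v : pt) (h : R) : pt := (p.1 + h * v.1, p.2 + h *: v.2).

Definition dirD (f : pt -> R) (v : pt) : pt -> R :=
  fun p => derive1 (fun h => f (shift p v h)) 0.

Definition dir_derivable (f : pt -> R) (v : pt) (p : pt) : Prop :=
  derivable (fun h => f (shift p v h)) 0 1.

Definition iterD (f : pt -> R) (vs : seq pt) : pt -> R :=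
  foldr (fun v g => dirD g v) f vs.

(* f is C^infinity on the open set D with bounded derivatives of all orders:
   every iterated directional derivative exists at every point of D,
   is continuous on D and bounded on D. *)
Definition smooth_bdd (D : set pt) (f : pt -> R) : Prop :=
  forall vs : seq pt,
    (forall p v, D p -> dir_derivable (iterD f vs) v p) /\
    {within D, continuous (iterD f vs)} /\
    (exists M : R, forall p, D p -> `|iterD f vs p| <= M).
End Defs.

Definition Smx (R : realType) (a b : R) : 'M[R]_3 :=
  \matrix_(i < 3, j < 3)
    match nat_of_ord i, nat_of_ord j with
    | 0, 0 => 3 | 0, 1 => 0 | 0, _ => - a
    | 1, 0 => 0 | 1, 1 => 2 * a | 1, _ => 3 * b
    | _, 0 => - a | _, 1 => 3 * b | _, _ => a ^+ 2
    end.

Definition sorted_eigenvalues (R : realType) (M : 'M[R]_3) (l1 l2 l3 : R) : Prop :=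
  l1 <= l2 <= l3 /\
  char_poly M = ('X - l1%:P) * ('X - l2%:P) * ('X - l3%:P).

(* Main.v *)
Require Import Defs.
From HB Require Import structures.
From mathcomp Require Import all_boot all_order all_algebra.
From mathcomp Require Import all_classical all_reals all_analysis.
From mathcomp Require Import ring lra.
Import Order.TTheory GRing.Theory Num.Theory.
Import numFieldNormedType.Exports.
Local Open Scope classical_set_scope.
Local Open Scope ring_scope.



Section DQ.
Variable R : realType.
Implicit Types (f : R -> R) (t L : R).

Definition dq f t := fun h : R => h^-1 * (f (h + t) - f t).

Lemma dq_eq f t : (fun h : R => h^-1 *: ((f \o shift t) (h *: 1) - f t)) = dq f t.
Proof. apply/funext => h; by rewrite /dq /= /shift [h%:A]mulr1. Qed.

Lemma dq_derivable f t L : dq f t @ 0^' --> L -> derivable f t 1 /\ derive1 f t = L.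
Proof.
move=> H; split; first by rewrite /derivable dq_eq; apply/cvg_ex; exists L.
rewrite derive1E /derive dq_eq; exact: cvg_lim.
Qed.

Lemma derivable_dq f t : derivable f t 1 -> dq f t @ 0^' --> derive1 f t.
Proof.
rewrite /derivable dq_eq derive1E /derive dq_eq => H.
exact: H.
Qed.

Lemma h_cvg0 : (fun h : R => h) @ 0^' --> (0:R).
Proof. exact: nbhs_dnbhs. Qed.

Lemma dq_cont f t L : dq f t @ 0^' --> L -> (fun h => f (h + t)) @ 0^' --> f t.
Proof.
move=> H.
have H2 : (fun h => f t + h * dq f t h) @ 0^' --> f t + 0 * L.
  apply: cvgD; first exact: cvg_cst.
  apply: cvgM => //; exact: h_cvg0.
rewrite mul0r addr0 in H2.
apply: cvg_trans H2; apply: near_eq_cvg.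
near=> h.
have hn0 : h != 0 by near: h; exact: nbhs_dnbhs_neq.
rewrite /dq mulrA mulfV // mul1r; ring.
Unshelve. all: by end_near. Qed.
End DQ.
Arguments dq {R}.
Arguments dq_derivable {R f t L}.
Arguments derivable_dq {R f t}.
Arguments dq_cont {R f t L}.

Section Cubic.
Variable R : realType.
Definition P3 (l1 l2 l3 x : R) := (x - l1) * (x - l2) * (x - l3).

Lemma sgn_neg l1 l2 l3 q : l1 <= l2 -> l2 <= l3 -> P3 l1 l2 l3 q < 0 ->
  q < l1 \/ (l2 < q /\ q < l3).
Proof.
rewrite /P3 => h12 h23 hP.
case: (ltP q l1) => [|h1]; first by left.
right; case: (ltP l2 q) => h2; last first.
  have : 0 <= (q - l1) * ((q - l2) * (q - l3)) by apply: mulr_ge0; nra.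
  rewrite mulrA; lra.
case: (ltP q l3) => h3 //.
have : 0 <= (q - l1) * ((q - l2) * (q - l3)) by apply: mulr_ge0; nra.
rewrite mulrA; lra.
Qed.

Lemma sgn_pos l1 l2 l3 q : l1 <= l2 -> l2 <= l3 -> 0 < P3 l1 l2 l3 q ->
  (l1 < q /\ q < l2) \/ l3 < q.
Proof.
rewrite /P3 => h12 h23 hP.
case: (ltP l3 q) => [|h3]; first by right.
left; case: (ltP q l2) => h2; last first.
  have : (q - l1) * ((q - l2) * (q - l3)) <= 0.
    apply: mulr_ge0_le0; nra.
  rewrite mulrA; lra.
case: (ltP l1 q) => h1 //.
have : (q - l1) * ((q - l2) * (q - l3)) <= 0.
  apply: mulr_le0_ge0; nra.
rewrite mulrA; lra.
Qed.

Lemma locate l1 l2 l3 q0 q1 q2 q3 : l1 <= l2 -> l2 <= l3 ->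
  q0 < q1 -> q1 < q2 -> q2 < q3 ->
  P3 l1 l2 l3 q0 < 0 -> 0 < P3 l1 l2 l3 q1 -> P3 l1 l2 l3 q2 < 0 -> 0 < P3 l1 l2 l3 q3 ->
  (q0 < l1 /\ l1 < q1) /\ (q1 < l2 /\ l2 < q2) /\ (q2 < l3 /\ l3 < q3).
Proof.
move=> h12 h23 a b c s0 s1 s2 s3.
have := @sgn_neg _ _ _ _ h12 h23 s0; have := @sgn_pos _ _ _ _ h12 h23 s1.
have := @sgn_neg _ _ _ _ h12 h23 s2; have := @sgn_pos _ _ _ _ h12 h23 s3.
move=> [[? ?]|?] [?|[? ?]] [[? ?]|?] [?|[? ?]]; (split; [split|split; split]); lra.
Qed.

Section RootCont.
Variables (e1 e2 e3 f1 f2 f3 : R -> R) (t : R).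
Hypothesis h12 : forall s, f1 s <= f2 s.
Hypothesis h23 : forall s, f2 s <= f3 s.
Hypothesis hP : forall s x, P3 (f1 s) (f2 s) (f3 s) x
   = x^+3 - e1 s * x^+2 + e2 s * x - e3 s.
Hypothesis d12 : f1 t < f2 t.
Hypothesis d23 : f2 t < f3 t.
Hypothesis c1 : (fun h => e1 (h + t)) @ 0^' --> e1 t.
Hypothesis c2 : (fun h => e2 (h + t)) @ 0^' --> e2 t.
Hypothesis c3 : (fun h => e3 (h + t)) @ 0^' --> e3 t.

Let Pcvg q : (fun h => q^+3 - e1 (h+t) * q^+2 + e2 (h+t) * q - e3 (h+t)) @ 0^'
   --> (q^+3 - e1 t * q^+2 + e2 t * q - e3 t).
Proof.
apply: cvgB; last exact: c3.
apply: cvgD; last by apply: cvgM => //; exact: cvg_cst.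
apply: cvgB; first exact: cvg_cst.
by apply: cvgM => //; exact: cvg_cst.
Qed.

Let near_neg q : P3 (f1 t) (f2 t) (f3 t) q < 0 ->
  \forall h \near 0^', P3 (f1 (h+t)) (f2 (h+t)) (f3 (h+t)) q < 0.
Proof.
rewrite hP => H; have := cvgr_lt _ (Pcvg q) 0 H.
move=> HH; near=> h; rewrite hP; near: h; exact: HH.
Unshelve. all: by end_near. Qed.

Let near_pos q : 0 < P3 (f1 t) (f2 t) (f3 t) q ->
  \forall h \near 0^', 0 < P3 (f1 (h+t)) (f2 (h+t)) (f3 (h+t)) q.
Proof.
rewrite hP => H; have := cvgr_gt _ (Pcvg q) 0 H.
move=> HH; near=> h; rewrite hP; near: h; exact: HH.
Unshelve. all: by end_near. Qed.

Lemma roots_near (e : R) : 0 < e -> \forall h \near 0^',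
  `|f1 t - f1 (h+t)| < e /\ `|f2 t - f2 (h+t)| < e /\ `|f3 t - f3 (h+t)| < e.
Proof.
move=> e0.
set r1 := f1 t; set r2 := f2 t; set r3 := f3 t.
have D1 : r1 < r2 := d12. have D2 : r2 < r3 := d23.
have [eps [ep0 [epe [ep1 ep2]]]] : exists eps : R, 0 < eps /\ eps <= e /\
    eps < r2 - r1 /\ eps < r3 - r2.
  have [m [m0 [m1 m2]]] : exists m, 0 < m /\ m < r2 - r1 /\ m < r3 - r2.
    have [hh|hh] := leP (r2 - r1) (r3 - r2).
      by exists ((r2 - r1)/2); lra.
    by exists ((r3 - r2)/2); lra.
  have [hh|hh] := leP e m; first by exists e; lra.
  by exists m; lra.
have S1 : P3 r1 r2 r3 (r1 - eps) < 0.
  have hh : 0 < (r1 - eps - r2) * (r1 - eps - r3) by nra.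
  rewrite /P3 -mulrA; nra.
have S2 : 0 < P3 r1 r2 r3 (r1 + eps).
  have hh : 0 < (r1 + eps - r2) * (r1 + eps - r3) by nra.
  rewrite /P3 -mulrA; nra.
have S3 : 0 < P3 r1 r2 r3 (r2 - eps).
  have hh : 0 < (r2 - eps - r1) * (r2 - eps - r3) * (-1) by nra.
  rewrite /P3 mulrAC; nra.
have S4 : P3 r1 r2 r3 (r2 + eps) < 0.
  have hh : 0 < (r2 + eps - r1) * (r2 + eps - r3) * (-1) by nra.
  rewrite /P3 mulrAC; nra.
have S5 : P3 r1 r2 r3 (r3 - eps) < 0.
  have hh : 0 < (r3 - eps - r1) * (r3 - eps - r2) by nra.
  rewrite /P3; nra.
have S6 : 0 < P3 r1 r2 r3 (r3 + eps).
  have hh : 0 < (r3 + eps - r1) * (r3 + eps - r2) by nra.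
  rewrite /P3; nra.
near=> h.
have := @locate (f1 (h+t)) (f2 (h+t)) (f3 (h+t)) (r1 - eps) (r1 + eps) (r2 + eps) (r3 + eps)
  (h12 _) (h23 _).
have := @locate (f1 (h+t)) (f2 (h+t)) (f3 (h+t)) (r1 - eps) (r2 - eps) (r3 - eps) (r3 + eps)
  (h12 _) (h23 _).
have N1 : P3 (f1 (h+t)) (f2 (h+t)) (f3 (h+t)) (r1 - eps) < 0 by near: h; exact: near_neg.
have N2 : 0 < P3 (f1 (h+t)) (f2 (h+t)) (f3 (h+t)) (r1 + eps) by near: h; exact: near_pos.
have N3 : 0 < P3 (f1 (h+t)) (f2 (h+t)) (f3 (h+t)) (r2 - eps) by near: h; exact: near_pos.
have N4 : P3 (f1 (h+t)) (f2 (h+t)) (f3 (h+t)) (r2 + eps) < 0 by near: h; exact: near_neg.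
have N5 : P3 (f1 (h+t)) (f2 (h+t)) (f3 (h+t)) (r3 - eps) < 0 by near: h; exact: near_neg.
have N6 : 0 < P3 (f1 (h+t)) (f2 (h+t)) (f3 (h+t)) (r3 + eps) by near: h; exact: near_pos.
move=> /(_ ltac:(lra) ltac:(lra) ltac:(lra) N1 N3 N5 N6) [[? ?] [[? ?] [? ?]]].
move=> /(_ ltac:(lra) ltac:(lra) ltac:(lra) N1 N2 N4 N6) [[? ?] [[? ?] [? ?]]].
rewrite !ltr_norml; lra.
Unshelve. all: by end_near. Qed.
End RootCont.



Lemma key_alg (y g1 u1 v1 E1 E1' E2 E2' E3 E3' h : R) : h != 0 ->
 (y - g1) * (y - u1) * (y - v1) = y^+3 - E1 * y^+2 + E2 * y - E3 ->
 0 = y^+3 - E1' * y^+2 + E2' * y - E3' ->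
 (y - g1) * ((y - u1) * (y - v1)) = h * (- (h^-1 * (E1 - E1')) * y^+2
    + h^-1 * (E2 - E2') * y - h^-1 * (E3 - E3')).
Proof.
move=> hn0 H1 H2; rewrite mulrA H1.
apply/eqP; rewrite -subr_eq0.
have -> : y ^+ 3 - E1 * y ^+ 2 + E2 * y - E3 -
  h * (- (h^-1 * (E1 - E1')) * y ^+ 2 + h^-1 * (E2 - E2') * y - h^-1 * (E3 - E3'))
  = y^+3 - E1' * y^+2 + E2' * y - E3' by field.
by rewrite -H2.
Qed.

Section RootDeriv.
Variables (e1 e2 e3 g u v : R -> R) (t d1 d2 d3 : R).
Hypothesis hP : forall s x, P3 (g s) (u s) (v s) x
   = x^+3 - e1 s * x^+2 + e2 s * x - e3 s.
Hypothesis cu : (fun h => u (h + t)) @ 0^' --> u t.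
Hypothesis cv : (fun h => v (h + t)) @ 0^' --> v t.
Hypothesis nz : (g t - u t) * (g t - v t) != 0.
Hypothesis de1 : dq e1 t @ 0^' --> d1.
Hypothesis de2 : dq e2 t @ 0^' --> d2.
Hypothesis de3 : dq e3 t @ 0^' --> d3.

Lemma root_deriv : dq g t @ 0^' -->
  (d1 * g t ^+ 2 - d2 * g t + d3) / ((g t - u t) * (g t - v t)).
Proof.
set y := g t.
pose D := fun h => (y - u (h + t)) * (y - v (h + t)).
pose Q := fun h => - (dq e1 t h) * y^+2 + dq e2 t h * y - dq e3 t h.
have DC : D @ 0^' --> (y - u t) * (y - v t).
  apply: cvgM; (apply: cvgB; [exact: cvg_cst|]) => //.
have QC : Q @ 0^' --> - d1 * y^+2 + d2 * y - d3.
  apply: cvgB => //; apply: cvgD; last by apply: cvgM => //; exact: cvg_cst.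
  by apply: cvgM; [apply: cvgN|exact: cvg_cst].
have L : (fun h => - Q h * (D h)^-1) @ 0^' -->
    (- (- d1 * y^+2 + d2 * y - d3)) * ((y - u t) * (y - v t))^-1.
  by apply: cvgM; [apply: cvgN|apply: cvgV].
have -> : (d1 * y ^+ 2 - d2 * y + d3) / ((y - u t) * (y - v t)) =
   (- (- d1 * y^+2 + d2 * y - d3)) * ((y - u t) * (y - v t))^-1.
  by congr (_ * _); ring.
apply: cvg_trans L; apply: near_eq_cvg.
have Dnear : \forall h \near 0^', D h != 0.
  have n0 : 0 < `|(y - u t) * (y - v t)| by rewrite normr_gt0.
  near=> h.
  have : `|(y - u t) * (y - v t) - D h| < `|(y - u t) * (y - v t)|.
    by near: h; exact: cvgr_dist_lt.
  apply: contraTneq => ->; rewrite subr0 ltxx //.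
near=> h.
have hn0 : h != 0 by near: h; exact: nbhs_dnbhs_neq.
have Dh : D h != 0 by near: h; exact: Dnear.
have E0 := hP t y; rewrite /P3 /y subrr !mul0r in E0.
have E1 := hP (h + t) y; rewrite /P3 in E1.
have KEY : (y - g (h + t)) * D h = h * Q h.
  rewrite /D /Q /dq; exact: key_alg.
have K2 : y - g (h+t) = h * Q h / D h by rewrite -KEY mulfK.
rewrite /dq -/y.
have -> : g (h+t) = y - h * Q h / D h by rewrite -K2; ring.
field.
by rewrite Dh hn0.
Unshelve. all: by end_near. Qed.
End RootDeriv.
End Cubic.

Section DQalg.
Variable R : realType.
Implicit Types (f g : R -> R) (t k : R).

Lemma dqD_cvg f g t (Lf Lg : R) : dq f t @ 0^' --> Lf -> dq g t @ 0^' --> Lg ->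
  dq (fun s => f s + g s) t @ 0^' --> Lf + Lg.
Proof.
move=> Hf Hg; have -> : dq (fun s => f s + g s) t = (fun h => dq f t h + dq g t h).
  by apply/funext => h; rewrite /dq; ring.
exact: cvgD.
Qed.

Lemma dqB_cvg f g t (Lf Lg : R) : dq f t @ 0^' --> Lf -> dq g t @ 0^' --> Lg ->
  dq (fun s => f s - g s) t @ 0^' --> Lf - Lg.
Proof.
move=> Hf Hg; have -> : dq (fun s => f s - g s) t = (fun h => dq f t h - dq g t h).
  by apply/funext => h; rewrite /dq; ring.
exact: cvgB.
Qed.

Lemma dqZ_cvg f t k (Lf : R) : dq f t @ 0^' --> Lf ->
  dq (fun s => k * f s) t @ 0^' --> k * Lf.
Proof.
move=> Hf; have -> : dq (fun s => k * f s) t = (fun h => k * dq f t h).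
  by apply/funext => h; rewrite /dq; ring.
by apply: cvgM => //; exact: cvg_cst.
Qed.

Lemma dqC_cvg t k : dq (fun _ => k) t @ 0^' --> (0 : R).
Proof.
have -> : dq (fun _ => k) t = (fun h => 0).
  by apply/funext => h; rewrite /dq subrr mulr0.
exact: cvg_cst.
Qed.

Lemma dqM_cvg f g t (Lf Lg : R) : dq f t @ 0^' --> Lf -> dq g t @ 0^' --> Lg ->
  dq (fun s => f s * g s) t @ 0^' --> Lf * g t + f t * Lg.
Proof.
move=> Hf Hg.
have -> : dq (fun s => f s * g s) t = (fun h => dq f t h * g (h + t) + f t * dq g t h).
  by apply/funext => h; rewrite /dq; ring.
apply: cvgD; first by apply: cvgM => //; exact: dq_cont Hg.
by apply: cvgM => //; exact: cvg_cst.
Qed.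
End DQalg.

Lemma deriv_of_smooth (R : realType) l (D : set (R * 'rV[R]_l)) (f : R * 'rV[R]_l -> R) p :
  smooth_bdd D f -> D p ->
  dq (fun s => f (s, p.2)) p.1 @ 0^' --> derive1 (fun s => f (s, p.2)) p.1.
Proof.
move=> hs Dp.
have [H _] := hs [::].
have := H p (1, 0) Dp; rewrite /dir_derivable /= => /derivable_dq.
set F := fun h => _.
have -> : dq F 0 = dq (fun s => f (s, p.2)) p.1.
  apply/funext => h; rewrite /dq /F /Defs.shift /= !mulr1 !scaler0 !addr0 ?mul0r ?addr0.
  by rewrite (addrC h).
move=> HL; have [_ E] := dq_derivable HL; by rewrite E.
Qed.



Lemma det3 (R : comNzRingType) (f : nat -> nat -> R) :
  \det (\matrix_(i < 3, j < 3) f (nat_of_ord i) (nat_of_ord j)) =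
  f 0 0 * (f 1 1 * f 2 2 - f 1 2 * f 2 1)
  - f 0 1 * (f 1 0 * f 2 2 - f 1 2 * f 2 0)
  + f 0 2 * (f 1 0 * f 2 1 - f 1 1 * f 2 0).
Proof.
rewrite (expand_det_row _ ord0) !big_ord_recl big_ord0 /cofactor.
rewrite !(expand_det_row _ ord0) !big_ord_recl !big_ord0 /cofactor !det_mx11 !mxE /=.
rewrite /bump /=.
ring.
Qed.

Lemma Smx_char (R : realType) (a b x : R) : (char_poly (Smx a b)).[x] =
  x^+3 - (3 + 2*a + a^+2) * x^+2 + (6*a + 2*a^+2 + 2*a^+3 - 9*b^+2) * x
  - (4*a^+3 - 27*b^+2).
Proof.
rewrite /char_poly -horner_evalE -det_map_mx.
set g := fun i j : nat => (i == j)%:R * x -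
    match i, j with
    | 0, 0 => 3 | 0, 1 => 0 | 0, _ => - a
    | 1, 0 => 0 | 1, 1 => 2 * a | 1, _ => 3 * b
    | _, 0 => - a | _, 1 => 3 * b | _, _ => a ^+ 2
    end.
have -> : map_mx (horner_eval x) (char_poly_mx (Smx a b)) =
  \matrix_(i < 3, j < 3) g (nat_of_ord i) (nat_of_ord j).
  apply/matrixP => i j; rewrite !mxE /g /horner_eval /=.
  case: i => [[|[|[|i]]] Hi] //=; case: j => [[|[|[|j]]] Hj] //=;
    rewrite ?hornerE /=; ring.
rewrite det3 /g /=.
ring.
Qed.



Definition Pp {R : realFieldType} (a D x : R) :=
  x^+3 - (3 + 2*a + a*a) * x^+2 + (6*a + 2*a*a + 2/3*a*a*a + D/3) * x - D.

Lemma apow {R : realFieldType} (a D : R) : 0 < a -> a < 1/100 -> 0 <= D -> D <= 4 * a^+3 ->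
  [/\ a * a < a / 100, a * a * a < a * a / 100, a * a * a * a < a * a * a / 100,
      0 < a * a * a * a & D <= 4 * (a * a * a)].
Proof.
move=> a0 a1 D0 D1.
have a2p : 0 < a * a by apply: mulr_gt0.
have a3p : 0 < a * a * a by apply: mulr_gt0.
have a4p : 0 < a * a * a * a by apply: mulr_gt0.
split => //.
- rewrite -subr_gt0; have -> : a/100 - a*a = a*(1/100 - a) by field.
  apply: mulr_gt0 => //; lra.
- rewrite -subr_gt0; have -> : a*a/100 - a*a*a = (a*a)*(1/100 - a) by field.
  apply: mulr_gt0 => //; lra.
- rewrite -subr_gt0; have -> : a*a*a/100 - a*a*a*a = (a*a*a)*(1/100 - a) by field.
  apply: mulr_gt0 => //; lra.
- have E : a^+3 = a*a*a by rewrite !exprS expr0 mulr1 mulrA.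
  lra.
Qed.
Lemma s0 (R : realFieldType) (a D : R) : 0 < a -> a < 1/100 -> 0 <= D -> D <= 4 * a^+3 ->
  Pp a D (-1) < 0.
Proof.
move=> a0 a1 D0 D1; have [a2 a3 a4 a4p D2] := apow a D a0 a1 D0 D1.
have -> : Pp a D (-1) = -4 - 8*a - 3*(a*a) - 2/3*(a*a*a) - 4/3*D by rewrite /Pp; field.
have aD : 0 <= a * D by apply: mulr_ge0 => //; lra.
nra.
Qed.
Lemma s1 (R : realFieldType) (a D : R) : 0 < a -> a < 1/100 -> 0 <= D -> D <= 4 * a^+3 ->
  0 < Pp a D (a/2).
Proof.
move=> a0 a1 D0 D1; have [a2 a3 a4 a4p D2] := apow a D a0 a1 D0 D1.
have -> : Pp a D (a/2) = 9/4*(a*a) + 5/8*(a*a*a) + 1/12*(a*a*a*a) + a*D/6 - D by rewrite /Pp; field.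
have aD : 0 <= a * D by apply: mulr_ge0 => //; lra.
nra.
Qed.
Lemma s2 (R : realFieldType) (a D : R) : 0 < a -> a < 1/100 -> 0 <= D -> D <= 4 * a^+3 ->
  0 < Pp a D (3*a/2).
Proof.
move=> a0 a1 D0 D1; have [a2 a3 a4 a4p D2] := apow a D a0 a1 D0 D1.
have -> : Pp a D (3*a/2) = 9/4*(a*a) + 15/8*(a*a*a) - 5/4*(a*a*a*a) + a*D/2 - D by rewrite /Pp; field.
have aD : 0 <= a * D by apply: mulr_ge0 => //; lra.
nra.
Qed.
Lemma s3 (R : realFieldType) (a D : R) : 0 < a -> a < 1/100 -> 0 <= D -> D <= 4 * a^+3 ->
  Pp a D (3*a) < 0.
Proof.
move=> a0 a1 D0 D1; have [a2 a3 a4 a4p D2] := apow a D a0 a1 D0 D1.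
have -> : Pp a D (3*a) = -9*(a*a) + 15*(a*a*a) - 7*(a*a*a*a) + a*D - D by rewrite /Pp; field.
have aD : 0 <= a * D by apply: mulr_ge0 => //; lra.
nra.
Qed.
Lemma s4 (R : realFieldType) (a D : R) : 0 < a -> a < 1/100 -> 0 <= D -> D <= 4 * a^+3 ->
  Pp a D (1) < 0.
Proof.
move=> a0 a1 D0 D1; have [a2 a3 a4 a4p D2] := apow a D a0 a1 D0 D1.
have -> : Pp a D (1) = -2 + 4*a + a*a + 2/3*(a*a*a) - 2/3*D by rewrite /Pp; field.
have aD : 0 <= a * D by apply: mulr_ge0 => //; lra.
nra.
Qed.
Lemma s5 (R : realFieldType) (a D : R) : 0 < a -> a < 1/100 -> 0 <= D -> D <= 4 * a^+3 ->
  0 < Pp a D (10).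
Proof.
move=> a0 a1 D0 D1; have [a2 a3 a4 a4p D2] := apow a D a0 a1 D0 D1.
have -> : Pp a D (10) = 700 - 140*a - 80*(a*a) + 20/3*(a*a*a) + 7/3*D by rewrite /Pp; field.
have aD : 0 <= a * D by apply: mulr_ge0 => //; lra.
nra.
Qed.



Lemma Nbound {R : realFieldType} (phi A' D' p q C a D : R) : 0 < phi ->
  phi * `|A'| <= C * a -> phi * `|D'| <= C * D -> 0 <= C ->
  phi * `|A' * p + D' * q| <= C * a * `|p| + C * D * `|q|.
Proof.
move=> p0 hA hD C0.
apply: (le_trans (y := phi * (`|A'| * `|p| + `|D'| * `|q|))).
  by rewrite ler_pM2l // -!normrM ler_normD.
rewrite mulrDr !mulrA; apply: lerD; apply: ler_wpM2r => //.
Qed.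

Lemma final {R : realFieldType} (a D l1 l2 l3 A' D' L1 L2 phi C : R) :
  0 < a -> a < 1/100 -> 0 <= D -> D <= 4 * (a * a * a) -> 0 < phi -> 0 < C ->
  0 <= l1 -> l1 < a/2 -> 3*a/2 < l2 -> l2 < 3*a -> 1 < l3 -> l3 < 10 -> l1 * l2 * l3 = D ->
  phi^+2 * a <= C * D -> phi * `|D'| <= C * D -> phi * `|A'| <= C * a ->
  L1 * ((l1 - l2) * (l1 - l3)) =
     (2 + 2*a) * A' * l1^+2 - ((6 + 4*a + 2*(a*a)) * A' + D'/3) * l1 + D' ->
  L2 * ((l2 - l1) * (l2 - l3)) =
     (2 + 2*a) * A' * l2^+2 - ((6 + 4*a + 2*(a*a)) * A' + D'/3) * l2 + D' ->
  phi^+2 <= 100 * C * l1 /\ phi * `|L1| <= 100 * C * l1 /\ phi * `|L2| <= 100 * C * l2.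
Proof.
move=> a0 a1 D0 D1 p0 C0 l10 l1a l2a l2b l3a l3b Dl hphi hD hA E1 E2.
have Dle : D <= 30 * a * l1.
  rewrite -Dl.
  have h23 : l2 * l3 <= 30 * a by nra.
  have : l1 * (l2 * l3) <= l1 * (30 * a) by apply: ler_wpM2l.
  rewrite mulrA; lra.
have aC : 0 < C * a by apply: mulr_gt0.
split.
  have : phi^+2 * a <= (30 * C * l1) * a.
    apply: (le_trans hphi).
    have : C * D <= C * (30 * a * l1) by apply: ler_wpM2l => //; exact: ltW.
    lra.
  rewrite ler_pM2r // => H.
  have : 0 <= C * l1 by apply: mulr_ge0 => //; lra.
  lra.
split.
  set p := (2 + 2*a) * l1^+2 - (6 + 4*a + 2*(a*a)) * l1.
  set q := 1 - l1/3.
  have EN : L1 * ((l1 - l2) * (l1 - l3)) = A' * p + D' * q by rewrite E1 /p /q; ring.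
  have NB := Nbound _ _ _ p q _ _ _ p0 hA hD (ltW C0).
  rewrite -EN normrM mulrA in NB.
  have hp : `|p| <= 10 * l1.
    rewrite ler_norml; apply/andP; split; rewrite /p; nra.
  have hq : `|q| <= 1 by rewrite ler_norml; apply/andP; split; rewrite /q; lra.
  have G : a / 2 <= `|(l1 - l2) * (l1 - l3)|.
    rewrite ger0_norm; nra.
  have phL : 0 <= phi * `|L1| by apply: mulr_ge0 => //; lra.
  have S1 : C * a * `|p| <= C * a * (10 * l1) by apply: ler_wpM2l => //; lra.
  have S2 : C * D * `|q| <= C * D by rewrite -[X in _ <= X]mulr1; apply: ler_wpM2l => //; apply: mulr_ge0 => //; exact: ltW.
  have S3 : C * D <= C * (30 * a * l1) by apply: ler_wpM2l => //; lra.
  have S4 : phi * `|L1| * (a/2) <= phi * `|L1| * `|(l1 - l2) * (l1 - l3)| by apply: ler_wpM2l.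
  have E : C * a * (10 * l1) + C * (30 * a * l1) = 4/5 * ((100 * C * l1) * (a / 2)) by field.
  have P : 0 <= (100 * C * l1) * (a / 2).
    apply: mulr_ge0; last lra; apply: mulr_ge0; [apply: mulr_ge0; lra| lra].
  have : phi * `|L1| * (a/2) <= (100 * C * l1) * (a / 2) by lra.
  by rewrite ler_pM2r //; lra.
set p := (2 + 2*a) * l2^+2 - (6 + 4*a + 2*(a*a)) * l2.
set q := 1 - l2/3.
have EN : L2 * ((l2 - l1) * (l2 - l3)) = A' * p + D' * q by rewrite E2 /p /q; ring.
have NB := Nbound _ _ _ p q _ _ _ p0 hA hD (ltW C0).
rewrite -EN normrM mulrA in NB.
have hp : `|p| <= 7 * l2.
  rewrite ler_norml; apply/andP; split; rewrite /p; nra.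
have hq : `|q| <= 1 by rewrite ler_norml; apply/andP; split; rewrite /q; lra.
have G : a / 2 <= `|(l2 - l1) * (l2 - l3)|.
  rewrite ler0_norm; nra.
have phL : 0 <= phi * `|L2| by apply: mulr_ge0 => //; lra.
have Dl2 : D <= a * l2.
  have : a * a <= a * (2/3 * l2) by apply: ler_wpM2l; lra.
  have : a * a * a <= a * (2/3 * l2) * (1/100) by nra.
  lra.
have S1 : C * a * `|p| <= C * a * (7 * l2) by apply: ler_wpM2l => //; lra.
have S2 : C * D * `|q| <= C * D by rewrite -[X in _ <= X]mulr1; apply: ler_wpM2l => //; apply: mulr_ge0 => //; exact: ltW.
have S3 : C * D <= C * (a * l2) by apply: ler_wpM2l => //; lra.
have S4 : phi * `|L2| * (a/2) <= phi * `|L2| * `|(l2 - l1) * (l2 - l3)| by apply: ler_wpM2l.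
have E : C * a * (7 * l2) + C * (a * l2) = 4/25 * ((100 * C * l2) * (a / 2)) by field.
have P : 0 <= (100 * C * l2) * (a / 2).
  apply: mulr_ge0; last lra; apply: mulr_ge0; [apply: mulr_ge0; lra| lra].
have : phi * `|L2| * (a/2) <= (100 * C * l2) * (a / 2) by lra.
by rewrite ler_pM2r //; lra.
Qed.

Arguments P3 {R}.
Arguments Smx_char {R}.
Arguments locate {R}.
Arguments s0 {R a D}.
Arguments s1 {R a D}.
Arguments s2 {R a D}.
Arguments s3 {R a D}.
Arguments s4 {R a D}.
Arguments s5 {R a D}.

Theorem lemma3p1 (R : realType) (l : nat) (W : set 'rV[R]_l) (Xbar : 'rV[R]_l)
  (c T : R) (a b : R -> 'rV[R]_l -> R)
  (lam1 lam2 lam3 : R -> 'rV[R]_l -> R) :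
  open W -> W Xbar -> 0 < c -> 0 < T ->
  smooth_bdd [set p | - c < p.1 < T /\ W p.2] (fun p => a p.1 p.2) ->
  smooth_bdd [set p | - c < p.1 < T /\ W p.2] (fun p => b p.1 p.2) ->
  (forall t X, 0 <= t < T -> W X -> 0 <= 4 * a t X ^+ 3 - 27 * b t X ^+ 2) ->
  a 0 Xbar = 0 ->
  (forall t X, 0 < t < T -> W X -> 0 < a t X) ->
  (forall t X, sorted_eigenvalues (Smx (a t X) (b t X))
                 (lam1 t X) (lam2 t X) (lam3 t X)) ->
  exists U : set (R * 'rV[R]_l), nbhs (0, Xbar) U /\
    (forall t X, U (t, X) -> 0 < t ->
       derivable (fun s => lam1 s X) t 1 /\ derivable (fun s => lam2 s X) t 1) /\
    forall (omega : set (R * 'rV[R]_l)) (phi : R -> 'rV[R]_l -> R) (C : R),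
      omega `<=` [set p | U p /\ 0 < p.1] ->
      (forall t X, omega (t, X) -> 0 < phi t X) ->
      (exists M : R, forall t X, omega (t, X) -> phi t X <= M) ->
      0 < C ->
      (forall t X, omega (t, X) ->
         let Delta := fun s => 4 * a s X ^+ 3 - 27 * b s X ^+ 2 in
         phi t X ^+ 2 * a t X <= C * Delta t /\
         phi t X * `|derive1 Delta t| <= C * Delta t /\
         phi t X * `|derive1 (fun s => a s X) t| <= C * a t X) ->
      exists C' : R, 0 < C' /\
        forall t X, omega (t, X) ->
          phi t X ^+ 2 <= C' * lam1 t X /\
          phi t X * `|derive1 (fun s => lam1 s X) t| <= C' * lam1 t X /\
          phi t X * `|derive1 (fun s => lam2 s X) t| <= C' * lam2 t X.
Proof.
move=> Wo WX c0 T0 sa sb hD a00 ha hev.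
pose Dom := [set p : R * 'rV[R]_l | - c < p.1 < T /\ W p.2].
have nD : nbhs (0, Xbar) Dom.
  exists ([set x : R | -c < x < T], W) => /=.
    split; last by apply: open_nbhs_nbhs; split.
    have := @near_in_itvoo R (-c) T 0; rewrite in_itv /= oppr_lt0 c0 T0 => /(_ isT).
    by apply: filterS => x; rewrite in_itv.
  by move=> [x y] [/= hx hy]; split.
have Dom0 : Dom (0, Xbar) by exact: nbhs_singleton nD.
have na : \forall p \near (0, Xbar), `|a p.1 p.2| < 1/100.
  have [_ [hc _]] := sa [::].
  move/subspace_continuousP: hc => /(_ (0, Xbar) Dom0).
  move=> /cvgr_dist_lt /(_ (1/100) ltac:(lra)).
  rewrite near_withinE => H.
  apply: filterS2 nD H => p Dp /(_ Dp).
  by rewrite /from_subspace /= a00 sub0r normrN.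
pose U := [set p : R * 'rV[R]_l | Dom p /\ `|a p.1 p.2| < 1/100].
have nU : nbhs (0, Xbar) U by apply: filterS2 nD na => p.
have key : forall t X, U (t, X) -> 0 < t ->
  (derivable (fun s => lam1 s X) t 1 /\ derivable (fun s => lam2 s X) t 1) /\
  forall phi C : R, 0 < phi -> 0 < C ->
   phi^+2 * a t X <= C * (4 * a t X ^+ 3 - 27 * b t X ^+ 2) ->
   phi * `|derive1 (fun s => 4 * a s X ^+ 3 - 27 * b s X ^+ 2) t| <=
      C * (4 * a t X ^+ 3 - 27 * b t X ^+ 2) ->
   phi * `|derive1 (fun s => a s X) t| <= C * a t X ->
   phi^+2 <= 100 * C * lam1 t X /\
   phi * `|derive1 (fun s => lam1 s X) t| <= 100 * C * lam1 t X /\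
   phi * `|derive1 (fun s => lam2 s X) t| <= 100 * C * lam2 t X.
  move=> t X [[/= /andP[ct tT] WXX] /= aS] t0.
  have Dp : Dom (t, X) by split => //; apply/andP.
  pose aX := fun s => a s X. pose bX := fun s => b s X.
  pose Dl := fun s => 4 * a s X ^+ 3 - 27 * b s X ^+ 2.
  have dA : dq aX t @ 0^' --> derive1 aX t by exact: (@deriv_of_smooth _ _ _ _ (t, X) sa Dp).
  have dB : dq bX t @ 0^' --> derive1 bX t by exact: (@deriv_of_smooth _ _ _ _ (t, X) sb Dp).
  have dD : dq Dl t @ 0^' --> derive1 Dl t.
    have EDl : Dl = fun s => 4 * (aX s * aX s * aX s) - 27 * (bX s * bX s).
      by apply/funext => s; rewrite /Dl /aX /bX; ring.
    have HL : dq Dl t @ 0^' --> 4 * ((derive1 aX t * aX t + aX t * derive1 aX t) * aX t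
        + aX t * aX t * derive1 aX t) - 27 * (derive1 bX t * bX t + bX t * derive1 bX t).
      rewrite EDl; apply: dqB_cvg; apply: dqZ_cvg.
        by apply: dqM_cvg => //; apply: dqM_cvg.
      by apply: dqM_cvg.
    by have [_ ->] := dq_derivable HL.
  pose e1 := fun s => 3 + 2 * aX s + aX s * aX s.
  pose e2 := fun s => 6 * aX s + 2 * (aX s * aX s) + 2/3 * (aX s * aX s * aX s) + 1/3 * Dl s.
  pose e3 := Dl.
  set A' := derive1 aX t. set D' := derive1 Dl t.
  have d1 : dq e1 t @ 0^' --> 0 + 2 * A' + (A' * aX t + aX t * A').
    apply: dqD_cvg; [apply: dqD_cvg; [exact: dqC_cvg | exact: dqZ_cvg] | exact: dqM_cvg].
  have d2 : dq e2 t @ 0^' --> 6 * A' + 2 * (A' * aX t + aX t * A') +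
      2/3 * ((A' * aX t + aX t * A') * aX t + aX t * aX t * A') + 1/3 * D'.
    apply: dqD_cvg; last exact: dqZ_cvg.
    apply: dqD_cvg; last by apply: dqZ_cvg; apply: dqM_cvg => //; exact: dqM_cvg.
    apply: dqD_cvg; first exact: dqZ_cvg.
    by apply: dqZ_cvg; exact: dqM_cvg.
  have hP : forall s x, P3 (lam1 s X) (lam2 s X) (lam3 s X) x =
      x^+3 - e1 s * x^+2 + e2 s * x - e3 s.
    move=> r x; have [_ hc] := hev r X.
    have E2 : (('X - (lam1 r X)%:P) * ('X - (lam2 r X)%:P) * ('X - (lam3 r X)%:P)).[x]
       = (x - lam1 r X) * (x - lam2 r X) * (x - lam3 r X) by rewrite !hornerE.
    by rewrite /P3 -E2 -hc Smx_char /e1 /e2 /e3 /Dl /aX; field.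
  have so12 : forall s, lam1 s X <= lam2 s X by move=> s; case: (hev s X) => /andP[].
  have so23 : forall s, lam2 s X <= lam3 s X by move=> s; case: (hev s X) => /andP[].
  set A := aX t. set Dt := Dl t.
  have A0 : 0 < A by apply: ha => //; apply/andP.
  have A1 : A < 1/100 by move: aS; rewrite ltr_norml => /andP[].
  have Dt0 : 0 <= Dt by apply: hD => //; apply/andP; split => //; exact: ltW.
  have Dt1 : Dt <= 4 * A^+3.
    rewrite /Dt /Dl -/(aX t) -/A; have := sqr_ge0 (b t X); lra.
  have PP : forall x, P3 (lam1 t X) (lam2 t X) (lam3 t X) x = Pp A Dt x.
    by move=> z; rewrite hP /Pp /e1 /e2 /e3 -/A -/Dt; field.
  have := locate (lam1 t X) (lam2 t X) (lam3 t X) (-1) (A/2) 1 10 (so12 t) (so23 t).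
  rewrite !PP => /(_ ltac:(lra) ltac:(lra) ltac:(lra)).
  move=> /(_ (s0 A0 A1 Dt0 Dt1) (s1 A0 A1 Dt0 Dt1) (s4 A0 A1 Dt0 Dt1) (s5 A0 A1 Dt0 Dt1)).
  move=> [[_ L1a] [[L2a _] [L3a L3b]]].
  have := locate (lam1 t X) (lam2 t X) (lam3 t X) (-1) (3*A/2) (3*A) 10 (so12 t) (so23 t).
  rewrite !PP => /(_ ltac:(lra) ltac:(lra) ltac:(lra)).
  move=> /(_ (s0 A0 A1 Dt0 Dt1) (s2 A0 A1 Dt0 Dt1) (s3 A0 A1 Dt0 Dt1) (s5 A0 A1 Dt0 Dt1)).
  move=> [_ [[L2b L2c] _]].
  have Eprod : lam1 t X * lam2 t X * lam3 t X = Dt.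
    apply/eqP; rewrite -subr_eq0.
    have -> : lam1 t X * lam2 t X * lam3 t X - Dt =
      (0^+3 - e1 t * 0^+2 + e2 t * 0 - e3 t) - P3 (lam1 t X) (lam2 t X) (lam3 t X) 0.
      by rewrite /P3 /e3 -/Dt; ring.
    by rewrite hP subrr.
  have l10 : 0 <= lam1 t X.
    case: (ltP (lam1 t X) 0) => // h.
    have : lam1 t X * (lam2 t X * lam3 t X) < 0.
      have P : 0 < lam2 t X * lam3 t X by apply: mulr_gt0; lra.
      nra.
    rewrite mulrA Eprod; lra.
  have d12 : lam1 t X < lam2 t X by lra.
  have d23 : lam2 t X < lam3 t X by lra.
  have RN := @roots_near R e1 e2 e3 (fun s => lam1 s X) (fun s => lam2 s X)
     (fun s => lam3 s X) t so12 so23 hP d12 d23 (dq_cont d1) (dq_cont d2) (dq_cont dD).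
  have cont1 : (fun h => lam1 (h + t) X) @ 0^' --> lam1 t X.
    apply/cvgrPdist_lt => e e0; apply: filterS (RN e e0) => h /= [H _]; exact: H.
  have cont2 : (fun h => lam2 (h + t) X) @ 0^' --> lam2 t X.
    apply/cvgrPdist_lt => e e0; apply: filterS (RN e e0) => h /= [_ [H _]]; exact: H.
  have cont3 : (fun h => lam3 (h + t) X) @ 0^' --> lam3 t X.
    apply/cvgrPdist_lt => e e0; apply: filterS (RN e e0) => h /= [_ [_ H]]; exact: H.
  have nz1 : (lam1 t X - lam2 t X) * (lam1 t X - lam3 t X) != 0.
    by apply: mulf_neq0; apply/eqP; lra.
  have nz2 : (lam2 t X - lam1 t X) * (lam2 t X - lam3 t X) != 0.
    by apply: mulf_neq0; apply/eqP; lra.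
  have hP2 : forall s x, P3 (lam2 s X) (lam1 s X) (lam3 s X) x =
      x^+3 - e1 s * x^+2 + e2 s * x - e3 s.
    by move=> r z; rewrite -hP /P3; ring.
  have R1 := @root_deriv R e1 e2 e3 (fun s => lam1 s X) (fun s => lam2 s X)
     (fun s => lam3 s X) t _ _ _ hP cont2 cont3 nz1 d1 d2 dD.
  have R2 := @root_deriv R e1 e2 e3 (fun s => lam2 s X) (fun s => lam1 s X)
     (fun s => lam3 s X) t _ _ _ hP2 cont1 cont3 nz2 d1 d2 dD.
  have [dv1 E1] := dq_derivable R1.
  have [dv2 E2] := dq_derivable R2.
  split; first by split.
  move=> phi C p0 C0 hphi hDD hAA.
  have F := final _ _ _ _ _ _ _ _ _ _ _ A0 A1 Dt0 _ p0 C0 l10 L1a L2b L2c L3a L3b Eprod hphi hDD hAA.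
  apply: F.
  - have E3 : A^+3 = A * A * A by rewrite !exprS expr0 mulr1 mulrA.
    by rewrite -E3.
  - by rewrite E1 divfK // /A /A' /D'; field.
  - by rewrite E2 divfK // /A /A' /D'; field.
exists U.
split; first exact: nU.
split; first by move=> t X Ut t0; have [] := key t X Ut t0.
move=> omega phi C Hsub Hpos _ C0 Hh.
exists (100 * C); split; first by apply: mulr_gt0.
move=> t X Ho.
have [Ut t0] := Hsub _ Ho.
have [_ K] := key t X Ut t0.
have [h1 [h2 h3]] := Hh t X Ho.
exact: (K _ _ (Hpos t X Ho) C0 h1 h2 h3).
Qed.
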